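(* Let $k\ge 4$ be even and let $G=(V,E)$ be a $k$-uniform hyperstar of size $d\ge 2$, with $V=[n]$, $E=\{e_1,\ldots,e_d\}$, and heart the vertex $1$. Let $\mathcal L$ be its Laplacian tensor and, for $r=0,1,\ldots,d$, let $f_r(\lambda)=(\lambda-d)(1-\lambda)^{k-1}+r$. Then: (i) A real number $\lambda\neq 1$ is an H-eigenvalue of $\mathcal L$ if and only if it is a real root of $f_r$ for some $r\in\{0,1,\ldots,d\}$. (ii) If $\lambda\neq1$ is a real root of $f_r$, then, up to a nonzero constant multiple, the H-eigenvectors of $\mathcal L$ corresponding to $\lambda$ are exactly the vectors $\mathbf x$ obtained as follows: take $x_1=1-\lambda$; choose any $r$ edges of $G$ and assign to the vertices other than $1$ of these $r$ edges values $\pm1$ such that in each chosen edge the number of vertices assigned $-1$ is even; set $x_j=0$ for all other vertices $j$.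
   Context: A $k$-uniform hyperstar of size $d$ is a hypergraph whose vertex set is a disjoint union $V=V_0\cup V_1\cup\cdots\cup V_d$ with $|V_0|=1$, $|V_1|=\cdots=|V_d|=k-1$, and edge set $\{V_0\cup V_i: i\in[d]\}$; the vertex in $V_0$ is the heart. For a $k$-uniform hypergraph with $d_i$ the number of edges containing $i$, the Laplacian tensor $\mathcal L=\mathcal D-\mathcal A$ ($\mathcal D$ diagonal with entries $d_i$, $\mathcal A$ with entries $\frac1{(k-1)!}$ at index tuples forming an edge and $0$ otherwise) satisfies $(\mathcal L\mathbf x^{k-1})_i=d_ix_i^{k-1}-\sum_{e\in E,\,i\in e}\prod_{s\in e\setminus\{i\}}x_s$. A real $\lambda$ is an H-eigenvalue of $\mathcal L$ with H-eigenvector $\mathbf x\in\mathbb R^n\setminus\{0\}$ if $(\mathcal L\mathbf x^{k-1})_i=\lambda x_i^{k-1}$ for all $i\in[n]$. *)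

(* Defs.v *)
From mathcomp Require Import all_boot all_order all_algebra.
Set Implicit Arguments. Unset Strict Implicit. Unset Printing Implicit Defensive.
Import Order.TTheory GRing.Theory Num.Theory.
Local Open Scope ring_scope.

(* E is a k-uniform hyperstar of size d with heart h:
   V = {h} u V_1 u ... u V_d (disjoint), |V_i| = k-1, edges {h} u V_i. *)
Definition is_hyperstar (n k d : nat) (E : {set {set 'I_n}}) (h : 'I_n) : Prop :=
  [/\ #|E| = d,
      (forall e, e \in E -> h \in e /\ #|e| = k),
      (forall e1 e2, e1 \in E -> e2 \in E -> e1 != e2 -> e1 :&: e2 = [set h])
    & (forall v : 'I_n, exists2 e, e \in E & v \in e)].

Definition hdeg (n : nat) (E : {set {set 'I_n}}) (i : 'I_n) : nat :=
  #|[set e in E | i \in e]|.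

(* (L x^{k-1})_i = d_i x_i^{k-1} - sum_{e in E, i in e} prod_{s in e \ {i}} x_s *)
Definition laplacian_apply (R : nzRingType) (n k : nat) (E : {set {set 'I_n}})
  (x : 'I_n -> R) (i : 'I_n) : R :=
  (hdeg E i)%:R * x i ^+ (k.-1)
  - \sum_(e in E | i \in e) \prod_(s in e :\ i) x s.

Definition H_eigenvector (R : nzRingType) (n k : nat) (E : {set {set 'I_n}})
  (lambda : R) (x : 'I_n -> R) : Prop :=
  (exists i, x i != 0) /\
  forall i, laplacian_apply k E x i = lambda * x i ^+ (k.-1).

Definition H_eigenvalue (R : nzRingType) (n k : nat) (E : {set {set 'I_n}})
  (lambda : R) : Prop :=
  exists x : 'I_n -> R, H_eigenvector k E lambda x.

Definition fr (R : nzRingType) (k d r : nat) (lambda : R) : R :=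
  (lambda - d%:R) * (1 - lambda) ^+ (k.-1) + r%:R.

Definition star_vector (R : nzRingType) (n : nat) (E : {set {set 'I_n}}) (h : 'I_n)
  (lambda : R) (r : nat) (x : 'I_n -> R) : Prop :=
  exists F : {set {set 'I_n}},
  [/\ F \subset E /\ #|F| = r,
      x h = 1 - lambda,
      (forall v, v != h -> (exists2 e, e \in F & v \in e) ->
                 (x v = 1 \/ x v = -1)),
      (forall e, e \in F -> ~~ odd #|[set v in e :\ h | x v == -1]|)
    & (forall v, v != h -> (forall e, e \in F -> v \notin e) -> x v = 0)].

(* Main.v *)
Require Import Defs.
From mathcomp Require Import all_boot all_order all_algebra.
From mathcomp Require Import ring lra.
Import Order.TTheory GRing.Theory Num.Theory.
Local Open Scope ring_scope.
Set Implicit Arguments. Unset Strict Implicit. Unset Printing Implicit Defensive.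

Lemma hs_uniq (n k d : nat) (E : {set {set 'I_n}}) (h : 'I_n) (e e' : {set 'I_n}) (v : 'I_n) :
  is_hyperstar k d E h -> e \in E -> e' \in E -> v != h -> v \in e -> v \in e' -> e' = e.
Proof.
case=> _ _ Hint _ He He' vh ve ve'.
apply/eqP/negPn/negP => ne.
have := Hint e' e He' He ne; move/setP/(_ v).
by rewrite inE ve ve' in_set1 (negbTE vh).
Qed.

Lemma hs_card1 (n k d : nat) (E : {set {set 'I_n}}) (h : 'I_n) (e : {set 'I_n}) (i : 'I_n) :
  is_hyperstar k d E h -> e \in E -> i \in e -> #|e :\ i| = k.-1.
Proof.
case=> _ Hedge _ _ He ie.
by rewrite -(Hedge e He).2 (cardsD1 i e) ie.
Qed.

Lemma lap_nonheart (R : comNzRingType) (n k d : nat) (E : {set {set 'I_n}}) (h : 'I_n)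
  (x : 'I_n -> R) (v : 'I_n) (e : {set 'I_n}) :
  is_hyperstar k d E h -> v != h -> e \in E -> v \in e ->
  laplacian_apply k E x v = x v ^+ k.-1 - x h * \prod_(s in (e :\ h) :\ v) x s.
Proof.
move=> HS vh He ve; rewrite /laplacian_apply /hdeg.
have Hs : [set e' in E | v \in e'] = [set e].
  apply/setP => e'; rewrite !inE; apply/andP/eqP => [[He' ve']|->//].
  exact: (hs_uniq HS He He' vh ve ve').
rewrite Hs cards1 mul1r (eq_bigl (fun e' => e' \in [set e'' in E | v \in e''])); last first.
  by move=> e'; rewrite inE.
rewrite Hs big_set1.
have hin : h \in e :\ v.
  case: HS => _ Hedge _ _; by rewrite !inE eq_sym vh (Hedge e He).1.
rewrite (big_setD1 h hin) /=; congr (_ - _ * _); apply: eq_bigl => s.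
by rewrite !inE andbCA.
Qed.

Lemma prod_split (R : comNzRingType) (n : nat) (A : {set 'I_n}) (x : 'I_n -> R) v :
  v \in A -> \prod_(s in A) x s = x v * \prod_(s in A :\ v) x s.
Proof.
move=> vA; exact: (big_setD1 v vA).
Qed.

Lemma lap_heart (R : nzRingType) (n k d : nat) (E : {set {set 'I_n}}) (h : 'I_n)
  (x : 'I_n -> R) :
  is_hyperstar k d E h ->
  laplacian_apply k E x h = d%:R * x h ^+ k.-1 - \sum_(e in E) \prod_(s in e :\ h) x s.
Proof.
move=> HS; case: (HS) => Hc Hedge _ _; rewrite /laplacian_apply /hdeg.
have -> : [set e' in E | h \in e'] = E.
  by apply/setP => e'; rewrite !inE; apply/andP/idP => [[]//|He]; rewrite He (Hedge _ He).1.
rewrite Hc; congr (_ - _); apply: eq_bigl => e.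
by apply/andP/idP => [[]//|He]; rewrite He (Hedge _ He).1.
Qed.

Lemma lap_hom (R : comNzRingType) (n k d : nat) (E : {set {set 'I_n}}) (h : 'I_n)
  (x y : 'I_n -> R) (c : R) i :
  is_hyperstar k d E h -> (forall j, x j = c * y j) ->
  laplacian_apply k E x i = c ^+ k.-1 * laplacian_apply k E y i.
Proof.
move=> HS Hxy; rewrite /laplacian_apply Hxy exprMn mulrBr mulrCA; congr (_ - _).
rewrite mulr_sumr; apply: eq_bigr => e /andP[He ie].
rewrite -(hs_card1 HS He ie) -prodrMl; apply: eq_bigr => s _; exact: Hxy.
Qed.

Lemma even_pow1 (R : realFieldType) (k : nat) (y : R) :
  ~~ odd k -> (0 < k)%N -> y ^+ k = 1 -> y = 1 \/ y = -1.
Proof.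
move=> ev kp; rewrite -(odd_double_half k) (negbTE ev) add0n -muln2 mulnC exprM.
move/eqP; rewrite pexpr_eq1 ?sqr_ge0 //; last first.
  by move: kp ev; rewrite -{1}(odd_double_half k); case: (odd k) => //=; case: (k./2).
by rewrite sqrf_eq1 => /orP[] /eqP; [left|right].
Qed.

Lemma sign_prod (R : comNzRingType) (n : nat) (A : {set 'I_n}) (y : 'I_n -> R) :
  (forall v, v \in A -> y v = 1 \/ y v = -1) ->
  \prod_(v in A) y v = (-1) ^+ #|[set v in A | y v == -1]|.
Proof.
move=> H; rewrite (bigID (fun v => y v == -1)) /=.
rewrite [X in _ * X]big1 ?mulr1; last first.
  by move=> v /andP[vA ne]; case: (H v vA) => // e; rewrite e eqxx in ne.
rewrite -prodr_const; under eq_bigr => v /andP[_ /eqP ->] do [].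
by apply: eq_bigl => v; rewrite inE.
Qed.
Lemma forward (R : realFieldType) (n k d : nat)
    (E : {set {set 'I_n}}) (h : 'I_n) (lambda : R) (x : 'I_n -> R) :
  ~~ odd k -> (4 <= k)%N -> is_hyperstar k d E h -> lambda != 1 ->
  H_eigenvector k E lambda x ->
  exists F : {set {set 'I_n}}, [/\ F \subset E, fr k d #|F| lambda = 0 &
    exists2 c : R, c != 0 &
      exists2 y : 'I_n -> R, star_vector E h lambda #|F| y & forall i, x i = c * y i].
Proof.
move=> ev k4 HS l1 [[i0 Hi0] Heq].
case: (HS) => Hcard Hedge Hint Hcov.
have k0 : (0 < k)%N by apply: leq_trans k4.
have kS : k = k.-1.+1 by rewrite prednK.
have Ha : 1 - lambda != 0 by rewrite subr_eq0 eq_sym.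
have Hxh : x h != 0.
  apply/negP => /eqP Hxh0; move/negP: Hi0; apply.
  case: (eqVneq i0 h) => [->|ne]; first by rewrite Hxh0.
  have [e He Hie] := Hcov i0.
  have := Heq i0; rewrite (lap_nonheart _ HS ne He Hie) Hxh0 mul0r subr0 => H.
  have : (1 - lambda) * x i0 ^+ k.-1 = 0 by rewrite mulrBl mul1r -H subrr.
  move/eqP; rewrite mulf_eq0 (negbTE Ha) /= expf_eq0 => /andP[_ //].
set c := x h / (1 - lambda).
have Hc : c != 0 by rewrite mulf_neq0 ?invr_neq0.
set y := fun i => c^-1 * x i.
have xy : forall i, x i = c * y i by move=> i; rewrite /y mulrA mulfV // mul1r.
have Hy : forall i, laplacian_apply k E y i = lambda * y i ^+ k.-1.
  move=> i; apply: (mulfI (expf_neq0 k.-1 Hc)).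
  by rewrite -(lap_hom i HS xy) Heq xy exprMn mulrCA.
have yh : y h = 1 - lambda by rewrite /y /c invf_div divfK.
pose P e := \prod_(s in e :\ h) y s.
have HQ : forall e v, e \in E -> v \in e :\ h ->
    y v ^+ k.-1 = \prod_(s in (e :\ h) :\ v) y s.
  move=> e v He; rewrite in_setD1 => /andP[vh ve].
  have := Hy v; rewrite (lap_nonheart _ HS vh He ve) yh => H.
  apply: (mulfI Ha); apply/eqP; rewrite -subr_eq0; apply/eqP.
  by rewrite mulrBl mul1r -H; ring.
have HPk : forall e v, e \in E -> v \in e :\ h -> y v ^+ k = P e.
  move=> e v He vin; rewrite /P (prod_split _ vin) -(HQ e v He vin) -exprS.
  by rewrite -kS.
have dich : forall e, e \in E ->
    (P e = 0 /\ forall v, v \in e :\ h -> y v = 0) \/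
    (P e = 1 /\ forall v, v \in e :\ h -> y v = 1 \/ y v = -1).
  move=> e He; case: (eqVneq (P e) 0) => [P0|Pn0].
    left; split => // v vin; move: (HPk e v He vin); rewrite P0 => /eqP.
    by rewrite expf_eq0 => /andP[_ /eqP].
  have P1 : P e = 1.
    have : P e ^+ k = P e ^+ k.-1.
      rewrite /P -prodrXl -(hs_card1 HS He (Hedge e He).1) -prodr_const.
      by apply: eq_bigr => v vin; rewrite (HPk e v He vin).
    rewrite {1}kS exprS => H; apply: (mulIf (expf_neq0 k.-1 Pn0)); rewrite mul1r.
    exact: H.
  right; split => // v vin; apply: (even_pow1 ev k0).
  by rewrite (HPk e v He vin).
set F := [set e in E | P e == 1].
have FE : F \subset E by apply/subsetP => e; rewrite inE => /andP[].
have Hsum : \sum_(e in E) P e = #|F|%:R.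
  rewrite (bigID (fun e => P e == 1)) /=.
  rewrite [X in _ + X]big1 ?addr0; last first.
    move=> e /andP[He ne]; case: (dich e He) => [[->]//|[P1 _]].
    by rewrite P1 eqxx in ne.
  rewrite (eq_bigr (fun _ => 1)); last by move=> e /andP[_ /eqP].
  rewrite (eq_bigl (fun e => e \in F)); last by move=> e; rewrite inE.
  by rewrite sumr_const.
have Hfr : fr k d #|F| lambda = 0.
  have := Hy h; rewrite (lap_heart _ HS) yh /P Hsum /fr => H.
  by rewrite mulrBl -H; ring.
exists F; split => //; exists c => //; exists y => //.
exists F; split => //.
- move=> v vh [e eF ve]; move: eF; rewrite inE => /andP[He /eqP P1].
  case: (dich e He) => [[P0 _]|[_ Hpm]]; last by apply: Hpm; rewrite !inE vh.
  by move: P1; rewrite P0 => /eqP; rewrite eq_sym oner_eq0.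
- move=> e; rewrite inE => /andP[He /eqP P1].
  case: (dich e He) => [[P0 _]|[_ Hpm]].
    by move: P1; rewrite P0 => /eqP; rewrite eq_sym oner_eq0.
  move: P1; rewrite /P (sign_prod Hpm) -signr_odd.
  case: (odd _) => //= /eqP; rewrite expr1 -subr_eq0 -opprD oppr_eq0.
  by rewrite (_ : 1 + 1 = 2%:R) // pnatr_eq0.
- move=> v vh nF; have [e He ve] := Hcov v.
  have vin : v \in e :\ h by rewrite !inE vh.
  case: (dich e He) => [[_ H0]|[P1 _]]; first exact: H0.
  by move: (nF e); rewrite inE He P1 eqxx ve => /(_ isT).
Qed.
Lemma backward (R : realFieldType) (n k d : nat)
    (E : {set {set 'I_n}}) (h : 'I_n) (lambda : R) (r : nat) (y : 'I_n -> R) :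
  ~~ odd k -> (4 <= k)%N -> is_hyperstar k d E h -> lambda != 1 ->
  fr k d r lambda = 0 -> star_vector E h lambda r y ->
  H_eigenvector k E lambda y.
Proof.
move=> ev k4 HS l1 Hfr [F [[FE Fc] yh ypm ypar y0]].
case: (HS) => Hcard Hedge Hint Hcov.
have k0 : (0 < k)%N by apply: leq_trans k4.
have kS : k = k.-1.+1 by rewrite prednK.
have Ha : 1 - lambda != 0 by rewrite subr_eq0 eq_sym.
have oddk1 : odd k.-1 by move: ev; rewrite {1}kS /= negbK.
pose P e := \prod_(s in e :\ h) y s.
have inF : forall e, e \in F ->
    P e = 1 /\ forall v, v \in e :\ h -> y v = 1 \/ y v = -1.
  move=> e eF.
  have Hpm : forall v, v \in e :\ h -> y v = 1 \/ y v = -1.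
    by move=> v; rewrite in_setD1 => /andP[vh ve]; apply: ypm => //; exists e.
  split => //; rewrite /P (sign_prod Hpm) -signr_odd.
  by rewrite (negbTE (ypar e eF)).
have notF : forall e, e \in E -> e \notin F -> forall v, v \in e :\ h -> y v = 0.
  move=> e He eF v; rewrite in_setD1 => /andP[vh ve]; apply: y0 => // e' e'F.
  apply/negP => ve'.
  have e'E : e' \in E by apply: (subsetP FE).
  by rewrite -(hs_uniq HS He e'E vh ve ve') e'F in eF.
have Pnot : forall e, e \in E -> e \notin F -> P e = 0.
  move=> e He eF.
  have : (0 < #|e :\ h|)%N by rewrite (hs_card1 HS He (Hedge e He).1) -ltnS -kS (leq_trans _ k4).
  case/card_gt0P => v vin.
  by rewrite /P (prod_split _ vin) (notF e He eF v vin) mul0r.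
split.
  by exists h; rewrite yh.
move=> i; case: (eqVneq i h) => [->|ih].
  rewrite (lap_heart _ HS) yh.
  have -> : \sum_(e in E) P e = r%:R.
    rewrite (bigID (fun e => e \in F)) /=.
    rewrite [X in _ + X]big1 ?addr0; last first.
      by move=> e /andP[He eF]; apply: Pnot.
    rewrite (eq_bigr (fun _ => 1)); last by move=> e /andP[_ eF]; case: (inF e eF).
    rewrite (eq_bigl (fun e => e \in F)); last first.
      move=> e /=; apply/andP/idP => [[]//|eF]; split => //; exact: (subsetP FE).
    by rewrite sumr_const Fc.
  move: Hfr; rewrite /fr => H.
  apply/eqP; rewrite -subr_eq0; apply/eqP.
  transitivity (- ((lambda - d%:R) * (1 - lambda) ^+ k.-1 + r%:R)); first by ring.
  by rewrite H oppr0.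
have [e He ie] := Hcov i.
have iin : i \in e :\ h by rewrite !inE ih.
rewrite (lap_nonheart _ HS ih He ie) yh.
suff -> : \prod_(s in (e :\ h) :\ i) y s = y i ^+ k.-1 by ring.
case: (boolP (e \in F)) => eF.
  case: (inF e eF) => P1 Hpm.
  move: P1; rewrite /P (prod_split _ iin).
  case: (Hpm i iin) => ->; first by rewrite mul1r expr1n.
  by rewrite -signr_odd oddk1 expr1 mulN1r => /eqP; rewrite eqr_oppLR => /eqP.
rewrite (notF e He eF i iin) expr0n /= (negbTE (lt0n_neq0 _)); last first.
  by rewrite -ltnS -kS (leq_trans _ k4).
have : (0 < #|(e :\ h) :\ i|)%N.
  have := hs_card1 HS He (Hedge e He).1; rewrite (cardsD1 i) iin => Hc.
  by rewrite -(ltn_add2l 1) Hc addn0 -ltnS -kS (leq_trans _ k4).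
case/card_gt0P => w win.
have win' : w \in e :\ h by move: win; rewrite in_setD1 => /andP[].
by rewrite (prod_split _ win) (notF e He eF w win') mul0r.
Qed.

Lemma scale_eig (R : realFieldType) (n k d : nat)
    (E : {set {set 'I_n}}) (h : 'I_n) (lambda c : R) (x y : 'I_n -> R) :
  is_hyperstar k d E h -> c != 0 -> (forall i, x i = c * y i) ->
  H_eigenvector k E lambda y -> H_eigenvector k E lambda x.
Proof.
move=> HS Hc xy [[i0 Hi0] Heq]; split.
  by exists i0; rewrite xy mulf_neq0.
by move=> i; rewrite (lap_hom i HS xy) Heq xy exprMn mulrCA.
Qed.

Theorem proposition5p2 (R : realFieldType) (n k d : nat)
    (E : {set {set 'I_n}}) (h : 'I_n) :
  ~~ odd k -> (4 <= k)%N -> (2 <= d)%N -> is_hyperstar k d E h ->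
  (* (i) *)
  (forall lambda : R, lambda != 1 ->
     (H_eigenvalue k E lambda <-> exists2 r : nat, (r <= d)%N & fr k d r lambda = 0))
  /\
  (* (ii) *)
  (forall (r : nat) (lambda : R), (r <= d)%N -> lambda != 1 -> fr k d r lambda = 0 ->
     forall x : 'I_n -> R,
       H_eigenvector k E lambda x <->
       exists2 c : R, c != 0 &
         exists2 y : 'I_n -> R, star_vector E h lambda r y & forall i, x i = c * y i).
Proof.
move=> ev k4 d2 HS; case: (HS) => Hcard Hedge Hint Hcov.
split.
- move=> lambda l1; split.
  + case=> x Hx; have [F [FE Hfr _]] := forward ev k4 HS l1 Hx.
    by exists #|F| => //; rewrite -Hcard; exact: subset_leq_card.
  + case=> r rd Hfr.
    set s := take r (enum E); set F := [set e in s].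
    have FE : F \subset E.
      by apply/subsetP => e; rewrite inE => /mem_take; rewrite mem_enum.
    have U : uniq s by rewrite take_uniq ?enum_uniq.
    have Fc : #|F| = r by rewrite cardsE (card_uniqP U) size_takel // -cardE Hcard.
    pose y := fun v => if v == h then 1 - lambda
                       else if [exists e in F, v \in e] then (1 : R) else 0.
    exists y; apply: (backward ev k4 HS l1 Hfr); exists F; split => //.
    * by rewrite /y eqxx.
    * move=> v vh [e eF ve]; left; rewrite /y (negbTE vh).
      have Hex : [exists e0 in F, v \in e0] by apply/exists_inP; exists e.
      by rewrite Hex.
    * move=> e eF; rewrite (_ : [set v in e :\ h | y v == -1] = set0) ?cards0 //.
      apply/setP => v; rewrite !inE; apply/negP => /andP[/andP[vh ve] /eqP].
      have Hex : [exists e0 in F, v \in e0] by apply/exists_inP; exists e.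
      by rewrite /y (negbTE vh) Hex => /eqP; rewrite -addr_eq0 (_ : 1 + 1 = 2%:R) // pnatr_eq0.
    * move=> v vh nF; rewrite /y (negbTE vh).
      case: ifP => [/exists_inP [e eF ve]|//].
      by rewrite (negbTE (nF e eF)) in ve.
- move=> r lambda rd l1 Hfr x; split.
  + move=> Hx; have [F [FE HfrF [c Hc [y Hy xy]]]] := forward ev k4 HS l1 Hx.
    have rF : r = #|F|.
      have : fr k d r lambda = fr k d #|F| lambda by rewrite Hfr HfrF.
      by rewrite /fr => /addrI /eqP; rewrite eqr_nat => /eqP.
    by exists c => //; exists y => //; rewrite rF.
  + case=> c Hc [y Hy xy]; apply: (scale_eig HS Hc xy).
    exact: (backward ev k4 HS l1 Hfr Hy).
Qed.
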